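(* Let $(V,d,k,q)$ be an instance of the individually fair $k$-center with outliers problem (IF$k$CO) as defined in the context and let $l\ge 0$ be an integer. Then the refined algorithm (Algorithm 3) described in the context, run with parameter $l$, outputs a feasible solution $(S,O,\sigma)$ for this instance, i.e. $|S|\le k$ and $|O|\le q$.
   Context: IF$k$CO instance: a finite set $V$ with $|V|=n$, a metric $d$ on $V$ (nonnegative, symmetric, $d_{ii}=0$, triangle inequality), and integers $k\ge 1$ and $q\ge 0$. For $i\in V$, $NR_q(i)$ is the distance from $i$ to its $\lceil (n-q)/k\rceil$-th nearest neighbor in $V$, where $i$ counts as its own (first) nearest neighbor. A solution is $(S,O,\sigma)$ with $S,O\subseteq V$ and $\sigma:V\setminus O\to S$; feasible if $|S|\le k$, $|O|\le q$. For $\beta>0$, procedure $A(\beta)$: set $P:=V$, $S:=\emptyset$; while $P\ne\emptyset$ and $|S|<k$: pick $s\in P$ minimizing $NR_q(i)$ over $i\in P$, set $S:=S\cup\{s\}$, $P:=\{i\in P: d_{is}>\beta\, NR_q(i)\}$; finally set $O:=P$ and let $\sigma(i)$ be a nearest center in $S$ for each $i\in V\setminus O$. Algorithm 2 is $A(2)$. Algorithm 3 (input: instance and integer $l\ge0$): compute $(S,O,\sigma):=$ output of Algorithm 2; set $t:=0$, $\beta_1:=1$, $\beta_2:=2$, $\beta:=\beta_1$. While $t<l$: run $A(\beta)$ obtaining $(S_\beta,O_\beta,\sigma_\beta)$; if $|O_\beta|>q$, set $\beta_1:=\beta$; if $|O_\beta|\le q$, set $(S,O,\sigma):=(S_\beta,O_\beta,\sigma_\beta)$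 and $\beta_2:=\beta$; in either case then set $\beta:=(\beta_1+\beta_2)/2$ and $t:=t+1$. Output $(S,O,\sigma)$. *)

(* Defs.v *)
From mathcomp Require Import all_boot all_order all_algebra.
Set Implicit Arguments. Unset Strict Implicit. Unset Printing Implicit Defensive.
Import Order.TTheory GRing.Theory Num.Theory.
Local Open Scope ring_scope.

Section IFkCO.
Variables (R : realFieldType) (V : finType) (d : V -> V -> R) (k q : nat).

Definition is_metric : Prop :=
  [/\ forall i j, 0 <= d i j,
      forall i j, d i j = d j i,
      forall i, d i i = 0 &
      forall i j l, d i l <= d i j + d j l].

(* m = ceil((n - q)/k) (equals 0 when n <= q) *)
Definition nr_index : nat := ((#|V| - q) + k.-1) %/ k.

(* NR_q(i): distance from i to its m-th nearest neighbour (i itself is the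
   first, at distance 0); index m is read as max(m,1). *)
Definition NR (i : V) : R :=
  nth 0 (sort <=%R [seq d i j | j <- enum V]) nr_index.-1.

(* A solution (S, O, sigma); sigma is only meaningful on V \ O. *)
Definition solution : Type := ({set V} * {set V} * (V -> V))%type.
Definition sol_S (x : solution) : {set V} := x.1.1.
Definition sol_O (x : solution) : {set V} := x.1.2.
Definition sol_sigma (x : solution) : V -> V := x.2.

Definition feasible (x : solution) : Prop :=
  (#|sol_S x| <= k)%N /\ (#|sol_O x| <= q)%N.

(* The while-loop of A(beta): A_loop beta P S P' S' means that starting from
   (P, S) some execution of the loop (with any tie-breaking) ends in (P', S'). *)
Inductive A_loop (beta : R) : {set V} -> {set V} -> {set V} -> {set V} -> Prop :=
| A_stop (P S : {set V}) : (P == set0) || (k <= #|S|)%N -> A_loop beta P S P S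
| A_step (P S : {set V}) (s : V) (P' S' : {set V}) :
    P != set0 -> (#|S| < k)%N -> s \in P ->
    (forall i, i \in P -> NR s <= NR i) ->
    A_loop beta [set i in P | beta * NR i < d i s] (s |: S) P' S' ->
    A_loop beta P S P' S'.

Definition A_out (beta : R) (x : solution) : Prop :=
  A_loop beta setT set0 (sol_O x) (sol_S x) /\
  forall i, i \notin sol_O x ->
    sol_sigma x i \in sol_S x /\
    forall s, s \in sol_S x -> d i (sol_sigma x i) <= d i s.

(* The loop of Algorithm 3: alg3_loop r b1 b2 b cur out means that, with r
   iterations remaining (r = l - t), bounds b1, b2, current beta b and current
   solution cur, the loop can end with output out. *)
Inductive alg3_loop : nat -> R -> R -> R -> solution -> solution -> Prop :=
| L_done b1 b2 b cur : alg3_loop 0 b1 b2 b cur cur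
| L_fail r b1 b2 b cur xb out :
    A_out b xb -> (q < #|sol_O xb|)%N ->
    alg3_loop r b b2 ((b + b2) / 2%:R) cur out ->
    alg3_loop r.+1 b1 b2 b cur out
| L_ok r b1 b2 b cur xb out :
    A_out b xb -> (#|sol_O xb| <= q)%N ->
    alg3_loop r b1 b ((b1 + b) / 2%:R) xb out ->
    alg3_loop r.+1 b1 b2 b cur out.

Definition alg3_out (l : nat) (x : solution) : Prop :=
  exists x0, A_out 2%:R x0 /\ alg3_loop l 1 2%:R 1 x0 x.

End IFkCO.

(* Main.v *)
Require Import Defs.
From mathcomp Require Import all_boot all_order all_algebra.
From mathcomp Require Import zify.
Import Order.TTheory GRing.Theory Num.Theory.
Set Implicit Arguments. Unset Strict Implicit.
Local Open Scope ring_scope.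

Section Proofs.
Variables (R : realFieldType) (V : finType) (d : V -> V -> R) (k q : nat).
Hypothesis hd : is_metric d.
Hypothesis hk : (1 <= k)%N.

Local Notation NR := (NR d k q).
Local Notation m := (nr_index V k q).

Lemma card_count (A : {set V}) : #|A| = count (mem A) (enum V).
Proof.
rewrite cardE /enum_mem size_filter count_filter.
have H : predI (mem A) (mem V) =1 mem A by move=> x /=; rewrite andbT.
by rewrite (eq_count H).
Qed.

Lemma arith_m : (#|V| - q <= k * m)%N /\ (m <= #|V|)%N.
Proof.
rewrite /nr_index; set a := (#|V| - q)%N.
have := divn_eq (a + k.-1)%N k. have := ltn_pmod (a + k.-1)%N hk.
set mm := ((a + k.-1) %/ k)%N. set r := ((a + k.-1) %% k)%N. move=> h1 h2.
split; nia.
Qed.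

Lemma exmin (A : {set V}) (f : V -> R) : A != set0 ->
  exists2 x, x \in A & forall y, y \in A -> f x <= f y.
Proof.
case/set0Pn => x0 Hx0.
case: (arg_minP f Hx0) => x Hx Hmin.
by exists x.
Qed.

Lemma NR_ge0 i : 0 <= NR i.
Proof.
case: hd => hpos _ _ _.
rewrite /Defs.NR.
set t := sort _ _.
case: (ltnP (nr_index V k q).-1 (size t)) => h.
  have : nth 0 t (nr_index V k q).-1 \in t by apply: mem_nth.
  rewrite mem_sort => /mapP [j _ ->]. exact: hpos.
by rewrite nth_default.
Qed.

Definition ball s := [set x | d s x <= NR s].

Lemma ball_card s : (m <= #|ball s|)%N.
Proof.
case: arith_m => _ hmn.
case Hm: m => [|m'] //.
rewrite card_count.
have -> : count (mem (ball s)) (enum V) =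
          count (fun y => y <= NR s) [seq d s j | j <- enum V].
  rewrite [RHS]count_map.
  have H : mem (ball s) =1 preim (d s) (fun y => y <= NR s) by move=> x; rewrite /= inE.
  by rewrite (eq_count H).
rewrite -(count_sort <=%R).
set t := sort _ _.
have st : sorted <=%R t by apply: sort_sorted; exact: le_total.
have szt : size t = #|V| by rewrite size_sort size_map -cardT.
have HNR : NR s = nth 0 t m' by rewrite /Defs.NR Hm.
rewrite -(cat_take_drop m'.+1 t) count_cat.
have hsz : size (take m'.+1 t) = m'.+1 by rewrite size_take szt -Hm ltn_neqAle hmn andbT; case: ltngtP => //.
apply: (leq_trans _ (leq_addr _ _)).
suff /eqP -> : count (fun y => y <= NR s) (take m'.+1 t) == size (take m'.+1 t) by rewrite hsz.
rewrite -all_count; apply/(all_nthP 0) => i; rewrite hsz => hi.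
rewrite nth_take // HNR.
apply: le_sorted_leq_nth => //; rewrite ?inE ?szt; lia.
Qed.

Lemma loop_S_bound beta P S P' S' : A_loop d k q beta P S P' S' ->
  (#|S| <= k)%N -> (#|S'| <= k)%N.
Proof.
elim => // {}P {}S s {}P' {}S' _ hlt _ _ _ IH _.
apply: IH. rewrite cardsU1. by case: (s \in S); rewrite /= ?add0n ?add1n // ltnW.
Qed.

Lemma loop_S_sub beta P S P' S' : A_loop d k q beta P S P' S' -> S \subset S'.
Proof.
elim => // {}P {}S s {}P' {}S' _ _ _ _ _ IH.
apply: subset_trans IH. exact: subsetUr.
Qed.

Definition U (S : {set V}) := [set x | [exists s in S, d s x <= NR s]].

Definition Inv (P S : {set V}) :=
  [/\ forall s i, s \in S -> i \in P -> NR s <= NR i /\ 2%:R * NR i < d i s,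
      (#|S| * m <= #|U S|)%N &
      forall x, x \in U S -> x \notin P].

Lemma loop2 P S P' S' : A_loop d k q 2%:R P S P' S' -> Inv P S -> (#|P'| <= q)%N.
Proof.
case: hd => hpos hsym h0 htri.
elim => {P S P' S'}.
  move=> P S /orP [/eqP -> _|hkS [_ hU hdis]]; first by rewrite cards0.
  have : (#|U S| + #|P| <= #|V|)%N.
    rewrite -cardsUI.
    have -> : U S :&: P = set0.
      apply/setP => x; rewrite !inE; apply/negP => /andP [hx hp].
      by move: (hdis x); rewrite inE hp => /(_ hx).
    by rewrite cards0 addn0 max_card.
  case: arith_m => h1 _.
  have : (k * m <= #|S| * m)%N by rewrite leq_mul2r hkS orbT.
  lia.
move=> P S s P' S' hP hlt hs hmin _ IH [h1 h2 h3].
apply: IH.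
have hsS : s \notin S.
  apply/negP => hsS; have [_ ] := h1 s s hsS hs.
  by rewrite h0 ltNge mulr_ge0 ?ler0n ?NR_ge0.
split.
- move=> s0 i; rewrite in_setU1 inE => /orP [/eqP -> | hs0] /andP [hiP hlti].
    by split => //; exact: hmin.
  exact: h1.
- rewrite cardsU1 hsS mulSn.
  have hsub : ball s :|: U S \subset U (s |: S).
    apply/subsetP => x; rewrite !inE => /orP [hx|/existsP [s0 /andP [hs0 hx]]];
      apply/existsP.
      by exists s; rewrite !inE eqxx.
    by exists s0; rewrite !inE hs0 orbT.
  apply: leq_trans (subset_leq_card hsub).
  rewrite cardsU.
  have -> : ball s :&: U S = set0.
    apply/setP => x; rewrite !inE; apply/negP => /andP [hx /existsP [s0 /andP [hs0 hx0]]].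
    have [hle hlt2] := h1 s0 s hs0 hs.
    have : d s s0 <= NR s + NR s0.
      apply: le_trans (htri s x s0) _; rewrite [d x s0]hsym; exact: lerD.
    move=> hh; have : d s s0 <= 2%:R * NR s.
      apply: le_trans hh _; rewrite mulr2n mulrDl mul1r; exact: lerD.
    by rewrite leNgt hlt2.
  by rewrite cards0 subn0 leq_add ?ball_card.
- move=> x; rewrite !inE => /existsP [s0]; rewrite !inE => /andP [/orP [/eqP -> | hs0] hx].
    apply/negP => /andP [hxP hlt2].
    have hm := hmin x hxP.
    have := NR_ge0 x => hge.
    move: hlt2; rewrite hsym; move=> hlt2.
    have : 2%:R * NR x < NR x by apply: lt_le_trans hlt2 (le_trans hx hm).
    rewrite mulr2n mulrDl mul1r -subr_lt0 addrK ltNge hge //.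
  apply/negP => /andP [hxP _].
  have : x \in U S by rewrite inE; apply/existsP; exists s0; rewrite hs0.
  by move/h3; rewrite hxP.
Qed.

Lemma loop_ex beta : 0 <= beta -> forall P S, exists P' S', A_loop d k q beta P S P' S'.
Proof.
case: hd => hpos hsym h0 htri.
move=> hb P; move: {2}#|P| (leqnn #|P|) => n; elim: n P => [|n IH] P hP S.
  exists P, S; apply: A_stop.
  by move: hP; rewrite leqn0 cards_eq0 => ->.
case hc: ((P == set0) || (k <= #|S|)%N).
  by exists P, S; apply: A_stop.
move/negbT: hc; rewrite negb_or -ltnNge => /andP [hP0 hlt].
have [s hs hmin] := exmin NR hP0.
set P2 := [set i in P | beta * NR i < d i s].
have [P' [S' hl]] : exists P' S', A_loop d k q beta P2 (s |: S) P' S'.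
  apply: IH.
  have hsub : P2 \subset P :\ s.
    apply/subsetP => x; rewrite !inE => /andP [hx hlt2]; rewrite hx andbT.
    apply/eqP => exs; move: hlt2; rewrite exs h0 ltNge mulr_ge0 //; exact: NR_ge0.
  apply: leq_trans (subset_leq_card hsub) _.
  move: hP; rewrite (cardsD1 s P) hs add1n ltnS //.
by exists P', S'; apply: (A_step hP0 hlt hs hmin).
Qed.

Lemma Aout_ex beta : 0 <= beta -> exists x, A_out d k q beta x.
Proof.
move=> hb; have [P' [S' hl]] := loop_ex hb setT set0.
pose sigma i := odflt i [pick s in S' | [forall s' in S', d i s <= d i s']].
exists ((S', P'), sigma); split => // i _.
have hne : S' != set0.
  inversion hl; subst.
    move: H; rewrite cards0 leqNgt hk orbF => /eqP /setP /(_ i).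
    by rewrite !inE.
  apply/set0Pn; exists s; apply: (subsetP (loop_S_sub H3)).
  by rewrite !inE eqxx.
have [s0 hs0 hmin0] := exmin (d i) hne.
rewrite /sol_sigma /sol_S /= /sigma.
case: pickP => [s /andP [hs /forallP hf] | hnone] /=.
  split => // s' hs'; by have := hf s'; rewrite hs'.
move: (hnone s0); rewrite hs0 /=; move/negP; case.
apply/forallP => s'; apply/implyP; exact: hmin0.
Qed.

Lemma alg3_ex r : forall b1 b2 b cur, 0 <= b1 -> 0 <= b2 -> 0 <= b ->
  exists out, alg3_loop d k q r b1 b2 b cur out.
Proof.
elim: r => [|r IH] b1 b2 b cur h1 h2 h3.
  by exists cur; apply: L_done.
have [xb hxb] := Aout_ex h3.
have hh : forall a c : R, 0 <= a -> 0 <= c -> 0 <= (a + c) / 2%:R.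
  by move=> a c ha hc; apply: divr_ge0; [exact: addr_ge0 | exact: ler0n].
case: (ltnP q #|sol_O xb|) => hq.
  have [out ho] := IH b b2 ((b + b2) / 2%:R) cur h3 h2 (hh _ _ h3 h2).
  by exists out; apply: L_fail hxb hq _; exact ho.
have [out ho] := IH b1 b ((b1 + b) / 2%:R) xb h1 h3 (hh _ _ h1 h3).
by exists out; apply: L_ok hxb hq _; exact ho.
Qed.

Lemma alg3_feas r b1 b2 b cur out : alg3_loop d k q r b1 b2 b cur out ->
  feasible k q cur -> feasible k q out.
Proof.
elim => // {}r {}b1 {}b2 {}b {}cur xb {}out hA hq _ IH hc.
apply: IH; split => //.
case: hA => hl _; apply: (loop_S_bound hl); by rewrite cards0.
Qed.

End Proofs.

Theorem lemma5 (R : realFieldType) (V : finType) (d : V -> V -> R)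
    (k q l : nat) (hd : is_metric d) (hk : (1 <= k)%N) :
  (exists x, alg3_out d k q l x) /\
  (forall x, alg3_out d k q l x -> feasible k q x).
Proof.
have h2 : (0 : R) <= 2%:R by exact: ler0n.
split.
  have [x0 hx0] := Aout_ex q hd hk h2.
  have [out ho] := alg3_ex q hd hk l (b1:=1) (b2:=2%:R) (b:=1) x0 ler01 h2 ler01.
  by exists out, x0.
move=> x [x0 [hx0 hl]].
apply: (alg3_feas hl).
case: hx0 => hl0 _; split.
  by apply: (loop_S_bound hl0); rewrite cards0.
apply: (loop2 hd hk hl0); split.
- by move=> s i; rewrite inE.
- by rewrite cards0 mul0n.
- by move=> x1; rewrite inE => /existsP [s0]; rewrite inE.
Qed.
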